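(* Let $N\ge 1$ and let $w=(w_1,\dots,w_{2N})$ be an original sequence with $N$ crossings, and let $\mathcal{C}\subset\mathbb{R}^N$ be its set of charge vectors (see context). Suppose there exist pairwise distinct indices $I_1,\dots,I_M\in\{1,\dots,N\}$, $M\ge 1$, forming a cyclic sequence of adjacent pairs: for every $k=1,\dots,M$ (with $I_{M+1}:=I_1$), the entry $(+,I_k)$ and the entry $(-,I_{k+1})$ occupy two consecutive positions of $w$, in either order. Let $\xi=\sum_{I=1}^N c_I e_I$ with all $c_I>0$. Then $\xi$ does not lie in the cone (set of all nonnegative linear combinations) generated by $\mathcal{C}\setminus\{e_{I_1},\dots,e_{I_M}\}$. Equivalently, every subset $S\subseteq\mathcal{C}$ with $\xi\in\mathrm{Cone}(S)$ contains $e_{I_k}$ for at least one $k\in\{1,\dots,M\}$.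
   Context: An original sequence with $N$ crossings is a word $w=(w_1,\dots,w_{2N})$ with $w_p=(s_p,I_p)$, $s_p\in\{+,-\}$, $I_p\in\{1,\dots,N\}$, such that for every $I\in\{1,\dots,N\}$ there is exactly one position $p$ with $w_p=(+,I)$ and exactly one position $p$ with $w_p=(-,I)$. Such a sequence arises from a $(1,1)$-tangle diagram with $N$ crossings by traversing the tangle from its incoming end to its outgoing end and recording, at each crossing $I$ passed, $+$ if the strand passes over and $-$ if it passes under. Let $e_1,\dots,e_N$ be the standard basis of $\mathbb{R}^N$, and set $\epsilon(+)=1$, $\epsilon(-)=-1$. For each position $p$ define $P(p)=-\epsilon(s_p)\sum_{r\ge p}\epsilon(s_r)\,e_{I_r}$ and $\overline{P}(p)=-\epsilon(s_p)\sum_{r\le p}\epsilon(s_r)\,e_{I_r}$. The set of charge vectors is $\mathcal{C}=\{e_1,\dots,e_N\}\cup\{P(p),\overline{P}(p): 1\le p\le 2N\}$. For a finite set $S\subset\mathbb{R}^N$, $\mathrm{Cone}(S)$ denotes the set of nonnegative linear combinations of elements of $S$. *)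

(* Defs.v *)
From HB Require Import structures.
From mathcomp Require Import all_boot all_order all_algebra.
Set Implicit Arguments. Unset Strict Implicit. Unset Printing Implicit Defensive.
Import Order.TTheory GRing.Theory Num.Theory.
Local Open Scope ring_scope.

(* Signs are booleans: true = '+' (over), false = '-' (under).
   Positions 1..2N are represented by 'I_(2N) (0-based), crossings
   1..N by 'I_N (0-based). Vectors of R^N are row vectors 'rV[R]_N. *)

Definition original_sequence (N : nat) (w : 'I_(2 * N) -> bool * 'I_N) : Prop :=
  forall (s : bool) (I : 'I_N), #|[set p | w p == (s, I)]| = 1%N.

Definition eps {R : numDomainType} (s : bool) : R := if s then 1 else -1.

Definition ebasis {R : numDomainType} (N : nat) (I : 'I_N) : 'rV[R]_N :=
  delta_mx 0 I.

Definition chargeP {R : numDomainType} (N : nat) (w : 'I_(2 * N) -> bool * 'I_N)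
  (p : 'I_(2 * N)) : 'rV[R]_N :=
  - (eps (w p).1 *: \sum_(r : 'I_(2 * N) | (p <= r)%N) (eps (w r).1 *: ebasis (w r).2)).

Definition chargePbar {R : numDomainType} (N : nat) (w : 'I_(2 * N) -> bool * 'I_N)
  (p : 'I_(2 * N)) : 'rV[R]_N :=
  - (eps (w p).1 *: \sum_(r : 'I_(2 * N) | (r <= p)%N) (eps (w r).1 *: ebasis (w r).2)).

Definition charge_vectors {R : numDomainType} (N : nat) (w : 'I_(2 * N) -> bool * 'I_N)
  (v : 'rV[R]_N) : Prop :=
  (exists I : 'I_N, v = ebasis I) \/
  (exists p : 'I_(2 * N), v = chargeP w p \/ v = chargePbar w p).

Definition in_cone {R : numDomainType} (N : nat) (S : 'rV[R]_N -> Prop)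
  (x : 'rV[R]_N) : Prop :=
  exists (n : nat) (v : 'I_n -> 'rV[R]_N) (a : 'I_n -> R),
    (forall i, S (v i)) /\ (forall i, 0 <= a i) /\ x = \sum_(i < n) a i *: v i.

Definition adjacent_entries (N : nat) (w : 'I_(2 * N) -> bool * 'I_N)
  (x y : bool * 'I_N) : Prop :=
  exists (p q : 'I_(2 * N)), q = p.+1 :> nat /\
    ((w p = x /\ w q = y) \/ (w p = y /\ w q = x)).

(* Main.v *)
Require Import Defs.
From HB Require Import structures.
From mathcomp Require Import all_boot all_order all_algebra.
From mathcomp Require Import zify.
Import Order.TTheory GRing.Theory Num.Theory.
Set Implicit Arguments. Unset Strict Implicit.
Local Open Scope ring_scope.

Definition posw (N : nat) (w : 'I_(2 * N) -> bool * 'I_N) (p0 : 'I_(2*N)) x :=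
  odflt p0 [pick p | w p == x].

Lemma posw_spec N (w : 'I_(2 * N) -> bool * 'I_N) p0 x :
  original_sequence w -> w (posw w p0 x) = x /\ forall r, w r = x -> r = posw w p0 x.
Proof.
case: x => s I Hw.
have [q Hq] := cards1P (introT eqP (Hw s I)).
have Hu : forall r, w r = (s, I) -> r = q.
  move=> r Hr; have : r \in [set p | w p == (s, I)] by rewrite inE Hr.
  by rewrite Hq inE => /eqP.
have Hqw : w q = (s, I).
  have : q \in [set p | w p == (s, I)] by rewrite Hq set11.
  by rewrite inE => /eqP.
rewrite /posw; case: pickP => [r /eqP Hr|H] /=.
  by split=> // r' Hr'; rewrite (Hu _ Hr') (Hu _ Hr).
by have := H q; rewrite Hqw eqxx.
Qed.

Lemma sum_Q (R : numDomainType) N (w : 'I_(2 * N) -> bool * 'I_N) p0 x (Q : pred 'I_(2*N)) :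
  original_sequence w ->
  \sum_(r | Q r) ((w r == x)%:R : R) = (Q (posw w p0 x))%:R.
Proof.
move=> Hw; have [H1 H2] := posw_spec p0 x Hw.
rewrite big_mkcond (bigD1 (posw w p0 x)) //= H1 eqxx big1 ?addr0.
  by case: (Q _).
move=> r Hr; case: (Q r) => //; case: eqP => // /H2 E.
by rewrite E eqxx in Hr.
Qed.

Lemma key (R : numDomainType) N (w : 'I_(2 * N) -> bool * 'I_N) (p x y : 'I_(2*N)) (Q : pred 'I_(2*N)) :
  (Q =1 (fun r => (p <= r)%N) \/ Q =1 (fun r => (r <= p)%N)) ->
  (w x).1 = true -> (w y).1 = false ->
  (nat_of_ord y = (nat_of_ord x).+1 \/ nat_of_ord x = (nat_of_ord y).+1) ->
  0 <= (eps (w p).1 : R) * ((Q x)%:R - (Q y)%:R).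
Proof.
move=> HQ wx wy adj.
case Qx: (Q x); case Qy: (Q y); rewrite ?subrr ?mulr0 //.
- have -> : p = x.
    by apply/val_inj => /=; case: HQ => HQ; rewrite !HQ in Qx Qy; lia.
  by rewrite wx /eps subr0 mulr1.
- have -> : p = y.
    by apply/val_inj => /=; case: HQ => HQ; rewrite !HQ in Qx Qy; lia.
  by rewrite wy /eps sub0r mulrNN mulr1.
Qed.

Lemma epsI (R : numDomainType) N (x : bool * 'I_N) I :
  (eps x.1 : R) * ((I == x.2)%:R) = (x == (true, I))%:R - (x == (false, I))%:R.
Proof.
case: x => [[] J] /=; rewrite /eps ?mul1r ?mulN1r !xpair_eqE /= ?andbF ?andbT;
  rewrite eq_sym; case: (J == I) => /=; rewrite ?subr0 ?sub0r ?oppr0 //.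
Qed.

Theorem proposition3p1 (R : realFieldType) (N : nat)
  (w : 'I_(2 * N) -> bool * 'I_N) (M : nat) (Ik : 'I_M -> 'I_N)
  (c : 'I_N -> R) :
  (1 <= N)%N ->
  original_sequence w ->
  (1 <= M)%N ->
  injective Ik ->
  (forall k k' : 'I_M, val k' = (k.+1 %% M)%N ->
     adjacent_entries w (true, Ik k) (false, Ik k')) ->
  (forall I, 0 < c I) ->
  ~ in_cone (fun v : 'rV[R]_N =>
               charge_vectors w v /\ (forall k : 'I_M, v <> ebasis (Ik k)))
            (\sum_(I < N) c I *: ebasis I).
Proof.
move=> HN Hw HM _ Hadj Hc [n [v [a [Hv [Ha Hx]]]]].
have p0 : 'I_(2 * N) by exists 0%N; lia.
pose pos := posw w p0.
pose phi (u : 'rV[R]_N) := \sum_(k < M) u 0 (Ik k).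
have phiZ : forall (m : nat) (b : 'I_m -> R) (u : 'I_m -> 'rV[R]_N),
    phi (\sum_(i < m) b i *: u i) = \sum_(i < m) b i * phi (u i).
  move=> m b u; rewrite /phi.
  under eq_bigr do rewrite summxE.
  rewrite exchange_big /=; apply: eq_bigr => i _.
  rewrite mulr_sumr; apply: eq_bigr => k _; by rewrite mxE.
have phie : forall J, phi (ebasis J) = \sum_(k < M) ((Ik k == J)%:R).
  by move=> J; rewrite /phi; apply: eq_bigr => k _; rewrite /ebasis mxE eqxx.
have phig : forall (Q : pred 'I_(2 * N)) p,
   phi (-(eps (w p).1 *: \sum_(r | Q r) (eps (w r).1 *: ebasis (w r).2))) =
   -(eps (w p).1 * \sum_(k < M) ((Q (pos (true, Ik k)))%:R - (Q (pos (false, Ik k)))%:R)).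
  move=> Q p; rewrite /phi mulr_sumr -sumrN; apply: eq_bigr => k _.
  rewrite mxE mxE summxE; congr (- (_ * _)).
  under eq_bigr do rewrite mxE /ebasis mxE eqxx /= epsI.
  by rewrite sumrB !(@sum_Q R N w p0) //.
pose succ (k : 'I_M) : 'I_M := Ordinal (ltn_pmod k.+1 HM).
have succ_inj : injective succ.
  move=> k1 k2 /(congr1 val) /= H; apply/val_inj => /=.
  have hm : forall k : 'I_M, (k.+1 %% M = if (k.+1 < M)%N then k.+1 else 0)%N.
    move=> k; case: ltnP => Hk; first by rewrite modn_small.
    have E : k.+1 = M by have := ltn_ord k; lia.
    by rewrite E modnn.
  move: H; rewrite !hm; have := ltn_ord k1; have := ltn_ord k2.
  case H1: (k1.+1 < M)%N; case H2: (k2.+1 < M)%N; lia.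
have posE : forall x r, w r = x -> pos x = r.
  by move=> x r Hr; have [_ H] := posw_spec p0 x Hw; rewrite (H _ Hr).
have posw1 : forall x, w (pos x) = x.
  by move=> x; have [H _] := posw_spec p0 x Hw.
have gen : forall (Q : pred 'I_(2 * N)) (p : 'I_(2 * N)),
    (Q =1 (fun r => (p <= r)%N) \/ Q =1 (fun r => (r <= p)%N)) ->
    0 <= (eps (w p).1 : R) * \sum_(k < M) ((Q (pos (true, Ik k)))%:R - (Q (pos (false, Ik k)))%:R).
  move=> Q p HQ; rewrite sumrB [X in _ - X](reindex_inj succ_inj) -sumrB mulr_sumr.

  apply: sumr_ge0 => k _.
  have [q1 [q2 [Hq Hcase]]] := Hadj k (succ k) erefl.
  case: Hcase => [[H1 H2]|[H1 H2]].
    rewrite (posE _ _ H1) (posE _ _ H2); apply: (@key R N w p q1 q2 Q HQ); by [rewrite H1|rewrite H2|left].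
  rewrite (posE _ _ H1) (posE _ _ H2); apply: (@key R N w p q2 q1 Q HQ); by [rewrite H1|rewrite H2|right].
have phiv : forall i, phi (v i) <= 0.
  move=> i; case: (Hv i) => [[[J ->] | [p [-> | ->]]] Hne].
  - rewrite phie big1 // => k _; case: eqP => // E.
    by case: (Hne k); rewrite E.
  - rewrite /chargeP (phig (fun r => (p <= r)%N)) oppr_le0; apply: (gen (fun r => (p <= r)%N) p); by left.
  - rewrite /chargePbar (phig (fun r => (r <= p)%N)) oppr_le0; apply: (gen (fun r => (r <= p)%N) p); by right.
have pos_xi : 0 < phi (\sum_(I < N) c I *: ebasis I).
  rewrite phiZ; under eq_bigr do rewrite phie mulr_sumr.
  rewrite exchange_big /=.
  have E : forall k : 'I_M, \sum_(I < N) c I * (Ik k == I)%:R = c (Ik k).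
    move=> k; rewrite (bigD1 (Ik k)) //= eqxx mulr1 big1 ?addr0 // => I /negbTE.
    by rewrite eq_sym => ->; rewrite mulr0.
  rewrite (eq_bigr (fun k => c (Ik k))); last by move=> k _; apply: E.
  rewrite (bigD1 (Ordinal HM)) //=.
  apply: (lt_le_trans (Hc (Ik (Ordinal HM)))); rewrite lerDl.
  by apply: sumr_ge0 => k _; apply: ltW.
move: pos_xi; rewrite Hx phiZ; apply/negP; rewrite -leNgt.
apply: sumr_le0 => i _; exact: mulr_ge0_le0.
Qed.
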